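(* For all $\alpha\in(0,\pi/2)$ and $\beta\in[0,\alpha]$, the function $g(r)=\frac{1+Ar}{\sqrt{1+r^2+Br}}$ is concave at $r=r_0(\alpha,\beta)$, i.e. $g''(r_0(\alpha,\beta))\le 0$.
   Context: For $\alpha\in(0,\pi/2)$ and $\beta\in[0,\alpha]$, let $A=\frac{2\tan\beta}{\tan\alpha+\tan\beta}$, $B=2\cos(2\alpha)$, and $r_0(\alpha,\beta)=\frac{2A-B}{2-AB}$ (the critical point of $g$). *)

(* Defs.v *)
From Stdlib Require Import Reals.
From Coquelicot Require Import Coquelicot.
Open Scope R_scope.

Definition A_ab (alpha beta : R) : R := 2 * tan beta / (tan alpha + tan beta).
Definition B_a (alpha : R) : R := 2 * cos (2 * alpha).

Definition g (alpha beta : R) (r : R) : R :=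
  (1 + A_ab alpha beta * r) / sqrt (1 + r ^ 2 + B_a alpha * r).

(* critical point r0(alpha,beta) = (2A - B)/(2 - AB) *)
Definition r0 (alpha beta : R) : R :=
  (2 * A_ab alpha beta - B_a alpha) / (2 - A_ab alpha beta * B_a alpha).

(* Main.v *)
Require Import Defs.
From Stdlib Require Import Reals Lra Psatz.
From Coquelicot Require Import Coquelicot.
Open Scope R_scope.

Section Core.
Variables a b : R.
Hypothesis Ha : 0 <= a <= 1.
Hypothesis Hb : -2 < b < 2.

Let Q r := 1 + r ^ 2 + b * r.
Lemma Qpos r : 0 < 1 + r ^ 2 + b * r.
Proof. clear -Hb. assert (0 <= (r + b/2)*(r+b/2)) by apply Rle_0_sqr. assert (b*b < 4) by nra. nra. Qed.

Let L r := (a - b / 2) + r * (a * b / 2 - 1).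
Let u r := / ((1 + r ^ 2 + b * r) * sqrt (1 + r ^ 2 + b * r)).

Lemma dg r : Derive (fun r => (1 + a * r) / sqrt (1 + r ^ 2 + b * r)) r = L r * u r.
Proof.
  pose proof (Qpos r) as HQ.
  pose proof (sqrt_lt_R0 _ HQ) as HS.
  pose proof (sqrt_sqrt _ (Rlt_le _ _ HQ)) as HSS.
  apply is_derive_unique.
  auto_derive.
  - simpl in *. repeat split; lra.
  - unfold L, u. simpl in *.
    set (S := sqrt (1 + r * (r * 1) + b * r)) in *.
    rewrite <- HSS. clearbody S. match goal with |- ?x = ?y => change (@eq R x y) end.
    transitivity ((a*(S*S) - (1+a*r)*(r+b/2)) / (S*S*S)); [field; lra|rewrite HSS; field; lra].
Qed.

Lemma core x : x = (2 * a - b) / (2 - a * b) ->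
  Derive_n (fun r => (1 + a * r) / sqrt (1 + r ^ 2 + b * r)) 2 x <= 0.
Proof.
  intros Hx.
  simpl.
  rewrite (Derive_ext _ (fun r => L r * u r)); [|exact dg].
  pose proof (Qpos x) as HQ.
  pose proof (sqrt_lt_R0 _ HQ) as HS.
  rewrite Derive_mult.
  2: { unfold L; auto_derive; auto. }
  2: { unfold u; auto_derive. simpl in HQ, HS. repeat split; [lra|]. apply Rmult_integral_contrapositive_currified; lra. }
  assert (HL : L x = 0).
  { unfold L. rewrite Hx. field. nra. }
  rewrite HL.
  assert (Hd : Derive L x = a * b / 2 - 1).
  { apply is_derive_unique. unfold L. auto_derive; auto. ring. }
  rewrite Hd.
  assert (Hu : 0 < u x).
  { unfold u. apply Rinv_0_lt_compat. nra. }
  assert (a*b < 2) by nra. rewrite Rmult_0_l, Rplus_0_r. assert (a*b/2-1 < 0) by lra. nra.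
Qed.
End Core.

Theorem lemma7 (alpha beta : R) :
  0 < alpha < PI / 2 -> 0 <= beta <= alpha ->
  Derive_n (g alpha beta) 2 (r0 alpha beta) <= 0.
Proof.
  intros Hal Hbe.
  assert (Ht : 0 < tan alpha) by (apply tan_gt_0; lra).
  assert (Hs : 0 <= tan beta).
  { destruct (Req_dec beta 0) as [->|]; [rewrite tan_0; lra|].
    apply Rlt_le, tan_gt_0; lra. }
  assert (Hst : tan beta <= tan alpha).
  { destruct (Req_dec beta alpha) as [->|]; [lra|].
    apply Rlt_le, tan_increasing; lra. }
  assert (HA : 0 <= A_ab alpha beta <= 1).
  { unfold A_ab. split.
    - apply Rmult_le_pos; [lra|]. apply Rlt_le, Rinv_0_lt_compat; lra.
    - apply Rmult_le_reg_r with (tan alpha + tan beta); [lra|].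
      field_simplify; lra. }
  assert (HB : -2 < B_a alpha < 2).
  { unfold B_a.
    assert (H1 : 0 < sin (2 * alpha)) by (apply sin_gt_0; lra).
    pose proof (sin2_cos2 (2 * alpha)) as H2. unfold Rsqr in H2. nra. }
  apply (core _ _ HA HB). reflexivity.
Qed.
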